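(* Let $\mathbb Z\langle X\rangle$ be the free unital associative ring on $X=\{x_1,x_2,\dots\}$ and let $I$ be the left ideal of $\mathbb Z\langle X\rangle$ generated by a set $S\subset\Gamma$. Then \[I=\Gamma\cdot S\;\oplus\bigoplus_{s\ge1;\ i_1\le\dots\le i_s}x_{i_1}x_{i_2}\cdots x_{i_s}\,\Gamma\cdot S,\] where $\Gamma\cdot S$ is the left ideal of the ring $\Gamma$ generated by $S$. In particular, $I\cap\Gamma=\Gamma\cdot S$.
   Context: $\Gamma$ is the unital subring of $\mathbb Z\langle X\rangle$ generated by all left-normed commutators $[x_{i_1},\dots,x_{i_l}]$ with $l\ge2$ (where $[a,b]=ab-ba$, $[a_1,\dots,a_n]=[[a_1,\dots,a_{n-1}],a_n]$). The direct sums are of additive subgroups. *)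

(* Defs.v *)
From HB Require Import structures.
From mathcomp Require Import all_boot all_order all_algebra.
From mathcomp.multinomials Require Import monalg.
Set Implicit Arguments. Unset Strict Implicit. Unset Printing Implicit Defensive.
Import GRing.Theory.
Local Open Scope ring_scope.

(* Z<X> : free unital associative ring on X = {x_0, x_1, ...}, realised as the
   monoid ring over int of the free monoid on nat (words = fmonom nat). *)
Notation ZX := {malg int[fmonom nat]}.

Definition xv (i : nat) : ZX := << fmu i >>.

Definition comm (a b : ZX) : ZX := a * b - b * a.

Definition lncomm (i j : nat) (ks : seq nat) : ZX :=
  foldl (fun a k => comm a (xv k)) (comm (xv i) (xv j)) ks.

Inductive Gamma : ZX -> Prop :=
  | Gamma_1 : Gamma 1
  | Gamma_comm i j ks : Gamma (lncomm i j ks)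
  | Gamma_add a b : Gamma a -> Gamma b -> Gamma (a + b)
  | Gamma_opp a : Gamma a -> Gamma (- a)
  | Gamma_mul a b : Gamma a -> Gamma b -> Gamma (a * b).

Inductive GammaIdeal (S : ZX -> Prop) : ZX -> Prop :=
  | GI_gen s : S s -> GammaIdeal S s
  | GI_0 : GammaIdeal S 0
  | GI_add a b : GammaIdeal S a -> GammaIdeal S b -> GammaIdeal S (a + b)
  | GI_lmul g a : Gamma g -> GammaIdeal S a -> GammaIdeal S (g * a).

Inductive LeftIdeal (S : ZX -> Prop) : ZX -> Prop :=
  | LI_gen s : S s -> LeftIdeal S s
  | LI_0 : LeftIdeal S 0
  | LI_add a b : LeftIdeal S a -> LeftIdeal S b -> LeftIdeal S (a + b)
  | LI_lmul r a : LeftIdeal S a -> LeftIdeal S (r * a).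

Definition mono (w : seq nat) : ZX := \prod_(i <- w) xv i.

(* the summand x_{i1}...x_{is} (Gamma . S); for w = [::] it is Gamma . S *)
Definition summand (S : ZX -> Prop) (w : seq nat) (q : ZX) : Prop :=
  exists2 a, GammaIdeal S a & q = mono w * a.

Definition sumFamily (S : ZX -> Prop) (ws : seq (seq nat)) (f : seq nat -> ZX) :=
  uniq ws /\ (forall w, w \in ws -> sorted leq w /\ summand S w (f w)).

(* Main.v *)
Require Import Defs.
From HB Require Import structures.
From mathcomp Require Import all_boot all_order all_algebra zify.
From mathcomp.multinomials Require Import monalg.
Import GRing.Theory Num.Theory.
Set Implicit Arguments. Unset Strict Implicit. Unset Printing Implicit Defensive.
Local Open Scope ring_scope.



Lemma last_max (s : seq nat) x : sorted leq s -> x \in s -> (x <= last 0 s)%N.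
Proof.
case: s => [//|a s] /=.
elim: s a x => [|b s IH] a x /=; first by rewrite inE => _ /eqP ->.
move=> /andP [hab hp]; rewrite inE => /orP [/eqP ->|xin].
  by apply: (leq_trans hab); apply: (IH b b hp); rewrite inE eqxx.
exact: (IH b x hp xin).
Qed.

Lemma sum_le (T : eqType) (r : seq T) (F G : T -> nat) :
  (forall x, x \in r -> F x <= G x)%N ->
  (\sum_(x <- r) F x <= \sum_(x <- r) G x)%N.
Proof. by move=> h; rewrite big_seq_cond [X in (_ <= X)%N]big_seq_cond; apply: leq_sum => i /andP [ir _]; apply: h. Qed.

Lemma sum_lt (T : eqType) (r : seq T) (F G : T -> nat) :
  (forall x, x \in r -> F x <= G x)%N -> (exists2 x, x \in r & F x < G x)%N ->
  (\sum_(x <- r) F x < \sum_(x <- r) G x)%N.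
Proof.
elim: r => [|a r IH] hle [x]; first by [].
rewrite !big_cons inE => /orP [/eqP ->|xr] hx.
  have hr : (\sum_(y <- r) F y <= \sum_(y <- r) G y)%N.
    by apply: sum_le => y yr; apply: hle; rewrite inE yr orbT.
  lia.
have h1 := hle a (mem_head _ _).
have h2 : (\sum_(y <- r) F y < \sum_(y <- r) G y)%N.
  apply: IH; last by exists x.
  by move=> y yr; apply: hle; rewrite inE yr orbT.
lia.
Qed.

Lemma exmax (T : eqType) (r : seq T) (P : pred T) (F : T -> nat) :
  has P r -> exists2 x, x \in r & P x && (F x == \max_(i <- r | P i) F i).
Proof.
elim: r => [//|a r IH] /=; rewrite big_cons.
case: (boolP (P a)) => Pa /=.
  case: (boolP (has P r)) => hr _.
    have [x xr /andP [Px /eqP Fx]] := IH hr.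
    case: (leqP (F x) (F a)) => hle.
      exists a; rewrite ?inE ?eqxx // Pa /= -Fx.
      by rewrite (maxn_idPl hle).
    exists x; rewrite ?inE ?xr ?orbT // Px /= -Fx.
    by rewrite (maxn_idPr (ltnW hle)).
  exists a; rewrite ?inE ?eqxx // Pa /=.
  rewrite big_hasC ?maxn0 //.
move=> hr; have [x xr hx] := IH hr.
by exists x => //; rewrite inE xr orbT.
Qed.

Section CmR.
Variable T : nzRingType.
Implicit Types a b x : T.
Definition cmR (a b : T) : T := a * b - b * a.
Lemma cmR_addl a b x : cmR (a + b) x = cmR a x + cmR b x.
Proof. by rewrite /cmR mulrDl mulrDr opprD addrACA. Qed.
Lemma cmR_addr a b x : cmR x (a + b) = cmR x a + cmR x b.
Proof. by rewrite /cmR mulrDl mulrDr opprD addrACA. Qed.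
Lemma cmR_oppl a x : cmR (- a) x = - cmR a x.
Proof. by rewrite /cmR mulNr mulrN opprK opprB addrC. Qed.
Lemma cmR_1l x : cmR 1 x = 0.
Proof. by rewrite /cmR mul1r mulr1 subrr. Qed.
Lemma cmR_comm a b : GRing.comm a b -> cmR a b = 0.
Proof. by rewrite /cmR => ->; rewrite subrr. Qed.

End CmR.

Section Generic.
Variables (R : nzRingType) (X : nat -> R).

Definition monoR (w : seq nat) : R := \prod_(i <- w) X i.

Lemma monoR_cons j w : monoR (j :: w) = X j * monoR w.
Proof. by rewrite /monoR big_cons. Qed.
Lemma monoR_nil : monoR [::] = 1.
Proof. by rewrite /monoR big_nil. Qed.
Lemma monoR_cat u v : monoR (u ++ v) = monoR u * monoR v.
Proof. by rewrite /monoR big_cat. Qed.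
Lemma monoR_rcons v j : monoR (rcons v j) = monoR v * X j.
Proof. by rewrite -cats1 monoR_cat /monoR big_seq1. Qed.

Lemma cmR_mull (a b x : R) : cmR (a * b) x = a * cmR b x + cmR a x * b.
Proof.
rewrite /cmR mulrBr mulrBl !mulrA.
by rewrite addrA subrK.
Qed.

Lemma swap3 (x y z : R) : x * (y * z) = y * (x * z) + cmR x y * z.
Proof. by rewrite /cmR mulrBl !mulrA addrC subrK. Qed.

Lemma moveX (g x : R) : g * x = x * g + cmR g x.
Proof. by rewrite /cmR addrC subrK. Qed.


Definition lncR (i j : nat) (ks : seq nat) : R :=
  foldl (fun a k => cmR a (X k)) (cmR (X i) (X j)) ks.

Section Span.
Variables (Gm GI : R -> Prop).
Hypothesis HGad : forall g k, Gm g -> Gm (cmR g (X k)).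
Hypothesis HGx : forall i j, Gm (cmR (X i) (X j)).
Hypothesis HGI0 : GI 0.
Hypothesis HGID : forall a b, GI a -> GI b -> GI (a + b).
Hypothesis HGIM : forall g a, Gm g -> GI a -> GI (g * a).

Lemma moveG q : forall g, Gm g -> exists l : seq (seq nat * R),
  (forall x, x \in l -> subseq x.1 q /\ Gm x.2) /\
  g * monoR q = \sum_(x <- l) monoR x.1 * x.2.
Proof.
elim: q => [|j q IH] g hg.
  exists [:: ([::], g)]; split.
    by move=> x; rewrite inE => /eqP -> /=.
  by rewrite big_seq1 /= monoR_nil mulr1 mul1r.
have [l1 [h1 e1]] := IH g hg.
have [l2 [h2 e2]] := IH _ (HGad j hg).
exists (map (fun x => (j :: x.1, x.2)) l1 ++ l2); split.
  move=> x; rewrite mem_cat => /orP [/mapP [y yl ->] /=|xl].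
    have [s g2] := h1 y yl; split => //.
    by rewrite /= eqxx.
  have [s g2] := h2 x xl; split => //.
  by apply: (subseq_trans s); apply: subseq_cons.
rewrite big_cat big_map /=.
rewrite monoR_cons mulrA (moveX g (X j)) mulrDl -mulrA e1 e2 mulr_sumr.
congr (_ + _); apply: eq_bigr => x _.
by rewrite monoR_cons mulrA.
Qed.

Definition good (P : pred nat) (n : nat) (x : seq nat * R) :=
  [/\ sorted leq x.1, all P x.1, (size x.1 <= n)%N & GI x.2].

Definition NP (P : pred nat) (n : nat) (p : R) := exists l : seq (seq nat * R),
  (forall x, x \in l -> good P n x) /\ p = \sum_(x <- l) monoR x.1 * x.2.

Lemma NP0 P n : NP P n 0.
Proof. by exists [::]; split => //; rewrite big_nil. Qed.

Lemma NPD P n p q : NP P n p -> NP P n q -> NP P n (p + q).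
Proof.
move=> [l1 [h1 ->]] [l2 [h2 ->]]; exists (l1 ++ l2); split.
  by move=> x; rewrite mem_cat => /orP [/h1|/h2].
by rewrite big_cat.
Qed.

Lemma NPsum (I : eqType) P n (r : seq I) (F : I -> R) :
  (forall i, i \in r -> NP P n (F i)) -> NP P n (\sum_(i <- r) F i).
Proof.
elim: r => [|i r IH] h; first by rewrite big_nil; apply: NP0.
rewrite big_cons; apply: NPD; first by apply: h; rewrite inE eqxx.
by apply: IH => j jr; apply: h; rewrite inE jr orbT.
Qed.

Lemma NPWn P n n' p : (n <= n')%N -> NP P n p -> NP P n' p.
Proof.
move=> le [l [h ->]]; exists l; split => // x /h [? ? s ?]; split => //.
exact: leq_trans s le.
Qed.

Lemma NP1 P n w a : sorted leq w -> all P w -> (size w <= n)%N -> GI a ->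
  NP P n (monoR w * a).
Proof.
move=> s hP sz ha; exists [:: (w, a)]; split; last by rewrite big_seq1.
by move=> x; rewrite inE => /eqP -> .
Qed.

Lemma NP_prepend P n j (l : seq (seq nat * R)) :
  (forall x, x \in l -> good (fun k => P k && (j <= k)%N) n x) -> P j ->
  NP P n.+1 (X j * \sum_(x <- l) monoR x.1 * x.2).
Proof.
move=> h hj; exists (map (fun x => (j :: x.1, x.2)) l); split.
  move=> x /mapP [y yl ->]; have [s hP sz ga] := h y yl; split => //=.
  - rewrite path_min_sorted //; apply/allP => k kin.
    by have /andP [] := allP hP k kin.
  - rewrite hj /=; apply/allP => k kin.
    by have /andP [] := allP hP k kin.
rewrite big_map mulr_sumr; apply: eq_bigr => x _.
by rewrite monoR_cons mulrA.
Qed.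

Lemma Lspan n : forall P u a, (size u <= n)%N -> all P u -> GI a ->
  NP P (size u) (monoR u * a).
Proof.
elim: n => [|n IHn] P u a.
  by case: u => // _ _ ha; apply: NP1.
move=> hsz hP ha.
have K : forall w P i a, sorted leq w -> (size w <= n)%N -> all P w -> P i ->
    GI a -> NP P (size w).+1 (X i * (monoR w * a)).
  elim=> [|j w' IHw] P' i a' hs hszw hPw hPi ha'.
    rewrite monoR_nil mul1r -(mulr1 (X i)) -monoR_nil -monoR_cons.
    by apply: NP1 => //=; rewrite hPi.
  case: (leqP i j) => hij.
    rewrite mulrA -monoR_cons; apply: NP1 => //=.
    - by rewrite hij.
    - by rewrite hPi.
  rewrite monoR_cons -mulrA swap3; apply: NPD.
    have hs' : sorted leq w' := path_sorted hs.
    have hall : all (leq j) w' := order_path_min leq_trans hs.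
    have hNP : NP (fun k => P' k && (j <= k)%N) (size w').+1 (X i * (monoR w' * a')).
      apply: IHw => //.
      + exact: (leq_trans (leqnSn _) hszw).
      + apply/allP => k kin; rewrite (allP hall k kin) andbT.
        by have /andP [] := hPw; move=> _ /allP; apply.
      + by rewrite hPi (ltnW hij).
    case: hNP => l [hl ->].
    apply: NP_prepend => //.
    by have /andP [] := hPw.
  have [l [hl el]] := moveG w' (HGx i j).
  rewrite mulrA el mulr_suml; apply: NPsum => x xl.
  rewrite -mulrA; have [s gx] := hl x xl.
  have szs := size_subseq s.
  apply: (NPWn _ (IHn P' x.1 (x.2 * a') _ _ _)).
  - by move: szs => /= ?; lia.
  - by move: hszw szs => /= ??; lia.
  - apply/allP => k kin; apply: (allP hPw).
    by rewrite inE (mem_subseq s kin) orbT.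
  - exact: HGIM.
case: u hsz hP => [_ _|i v hsz hP]; first by apply: NP1.
have [l [hl el]] := IHn P v a (hsz) (proj2 (andP hP)) ha.
rewrite monoR_cons -mulrA el mulr_sumr.
apply: NPsum => x xl; have [s hPx sz gx] := hl x xl.
apply: (NPWn _ (K x.1 P i x.2 s _ hPx _ gx)).
- by rewrite /=.
- by move: sz hsz => /= ??; lia.
- by have /andP [] := hP.
Qed.


Hypothesis HGz : forall c : int, Gm (c%:~R).

Definition NPA p := exists n, NP predT n p.

Lemma NPA0 : NPA 0.
Proof. by exists 0%N; apply: NP0. Qed.

Lemma NPAD p q : NPA p -> NPA q -> NPA (p + q).
Proof.
move=> [n1 h1] [n2 h2]; exists (maxn n1 n2); apply: NPD.
  by apply: (NPWn _ h1); rewrite leq_maxl.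
by apply: (NPWn _ h2); rewrite leq_maxr.
Qed.

Lemma NPA_sum (I : eqType) (r : seq I) (F : I -> R) :
  (forall i, i \in r -> NPA (F i)) -> NPA (\sum_(i <- r) F i).
Proof.
elim: r => [|i r IH] h; first by rewrite big_nil; apply: NPA0.
rewrite big_cons; apply: NPAD; first by apply: h; rewrite inE eqxx.
by apply: IH => j jr; apply: h; rewrite inE jr orbT.
Qed.

Lemma mulz_swap (m1 m2 b : R) (c : int) :
  (m1 *~ c) * (m2 * b) = (m1 * m2) * (b *~ c).
Proof. by rewrite mulrzAl !mulrzAr mulrA. Qed.

Lemma GI_z a c : GI a -> GI (a *~ c).
Proof. by move=> ha; rewrite -mulrzl; apply: HGIM. Qed.

Lemma NPA_lmul r p (l : seq (seq nat * int)) :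
  r = \sum_(y <- l) monoR y.1 *~ y.2 -> NPA p -> NPA (r * p).
Proof.
move=> -> [n [lp [h ->]]].
rewrite mulr_suml; apply: NPA_sum => y _.
rewrite mulr_sumr; apply: NPA_sum => x xl.
rewrite mulz_swap -monoR_cat.
have [_ _ _ gx] := h x xl.
exists (size (y.1 ++ x.1)); apply: Lspan => //.
- exact: all_predT.
- exact: GI_z.
Qed.

Lemma NP_group P n p : NP P n p -> exists ws (f : seq nat -> R), uniq ws /\
  (forall w, w \in ws -> sorted leq w /\ exists2 a, GI a & f w = monoR w * a) /\
  p = \sum_(w <- ws) f w.
Proof.
move=> [l [h ->]].
exists (undup (map fst l)), (fun w => monoR w * \sum_(x <- l | x.1 == w) x.2).
split; first exact: undup_uniq.
split.
  move=> w; rewrite mem_undup => /mapP [x xl ->]; split.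
    by have [] := h x xl.
  exists (\sum_(y <- l | y.1 == x.1) y.2) => //.
  rewrite big_seq_cond; apply: (big_ind GI) => // y /andP [yl _].
  by have [] := h y yl.
rewrite (eq_bigr (fun w => \sum_(x <- l | x.1 == w) monoR x.1 * x.2)); last first.
  move=> w _; rewrite mulr_sumr; apply: eq_bigr => x /eqP ->; done.
rewrite (exchange_big_dep predT) //=.
apply: eq_big_seq => x xl.
have xin : x.1 \in undup (map fst l) by rewrite mem_undup; apply: (map_f fst xl).
rewrite -big_filter.
have -> : [seq w <- undup (map fst l) | x.1 == w] = [:: x.1].
  rewrite -(filter_pred1_uniq (undup_uniq _) xin); apply: eq_filter => w.
  by rewrite /= eq_sym.
by rewrite big_seq1.
Qed.

End Span.

Section Indep.
Variables (Gm : R -> Prop) (d : nat -> R -> R).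
Hypothesis dD : forall M a b, d M (a + b) = d M a + d M b.
Hypothesis d0 : forall M, d M 0 = 0.
Hypothesis dG : forall M w g, Gm g -> d M (monoR w * g) = d M (monoR w) * g.
Hypothesis drc : forall M v, d M (monoR (rcons v M)) = d M (monoR v) * X M + monoR v.
Hypothesis dni : forall M v, M \notin v -> d M (monoR v) = 0.
Hypothesis tors : forall (n : nat) (a : R), (0 < n)%N -> a *+ n = 0 -> a = 0.
Hypothesis GmMn : forall g n, Gm g -> Gm (g *+ n).

Lemma dsum M (I : Type) (r : seq I) (F : I -> R) :
  d M (\sum_(i <- r) F i) = \sum_(i <- r) d M (F i).
Proof. exact: (big_morph _ (dD M) (d0 M)). Qed.

Lemma cnt_rcons (M : nat) s x : count_mem M (rcons s x) = (count_mem M s + (x == M))%N.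
Proof. by rewrite -cats1 count_cat /= addn0. Qed.

Lemma dcnt M v : sorted leq (rcons v M) ->
  d M (monoR (rcons v M)) = monoR v *+ count_mem M (rcons v M).
Proof.
elim/last_ind: v => [|v a IH] hs.
  by rewrite drc dni // mul0r add0r /= eqxx.
have hs' : sorted leq (rcons v a) := subseq_sorted leq_trans (subseq_rcons _ _) hs.
have haM : (a <= M)%N.
  have := last_max hs (_ : a \in rcons (rcons v a) M).
  by rewrite last_rcons; apply; rewrite mem_rcons inE mem_rcons inE eqxx orbT.
rewrite drc cnt_rcons eqxx addn1.
case: (eqVneq a M) => [eaM|naM].
  subst a; rewrite IH // mulrnAl -monoR_rcons -mulrSr.
  by rewrite cnt_rcons eqxx addn1.
have hMn : M \notin rcons v a.
  apply/negP => hin; have := last_max hs' hin; rewrite last_rcons => hMa.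
  by move/negP: naM; apply; rewrite eqn_leq haM hMa.
by rewrite dni // mul0r add0r (count_memPn hMn).
Qed.

Definition bl (w : seq nat) := match w with [::] => [::] | a :: s => belast a s end.

Lemma blK w : w != [::] -> rcons (bl w) (last 0 w) = w.
Proof. by case: w => // a s _ /=; rewrite -lastI. Qed.

Lemma indep N : forall ws (g : seq nat -> R),
  (\sum_(w <- ws) size w < N)%N -> uniq ws ->
  (forall w, w \in ws -> sorted leq w /\ Gm (g w)) ->
  \sum_(w <- ws) monoR w * g w = 0 -> forall w, w \in ws -> g w = 0.
Proof.
elim: N => // N IH ws g hN hu hw hs.
case: (boolP (all (fun w => w == [::]) ws)) => hall.
  have e : forall w, w \in ws -> w = [::] by move=> w /(allP hall) /eqP.
  case: ws hN hu hw hs hall e => [//|a ws'] hN hu hw hs hall e.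
  have ea := e a (mem_head _ _).
  have ews : ws' = [::].
    case: ws' hu e {hN hw hs hall} => // b r /= hu e.
    have eb : b = [::] by apply: e; rewrite !inE eqxx orbT.
    by move: hu; rewrite ea eb inE eqxx.
  subst; move: hs; rewrite big_seq1 monoR_nil mul1r => hs w.
  by rewrite inE => /eqP ->.
move: hall; rewrite -has_predC => hne.
set M := \max_(w <- ws | w != [::]) last 0 w.
have leM : forall w, w \in ws -> w != [::] -> (last 0 w <= M)%N.
  by move=> w wi wn; apply: leq_bigmax_seq.
have [w1 w1in /andP [w1n0 /eqP w1M]] := exmax (fun w => last 0 w) hne.
have w1n : w1 != [::] by exact: w1n0.
pose Q := fun w : seq nat => (w != [::]) && (last 0 w == M).
have notQ : forall w, w \in ws -> ~~ Q w -> M \notin w.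
  move=> w wi; rewrite /Q negb_and negbK => /orP [/eqP ->//|hl].
  apply/negP => hMw.
  have hw' : w != [::] by case: w hMw {wi hl}.
  have h1 := last_max (proj1 (hw w wi)) hMw.
  have h2 := leM w wi hw'.
  by move: hl; rewrite eqn_leq h1 h2.
have Qrc : forall w, Q w -> rcons (bl w) M = w.
  by move=> w /andP [wn /eqP <-]; apply: blK.
have dQ : forall w, w \in ws -> Q w ->
    d M (monoR w * g w) = monoR (bl w) * (g w *+ count_mem M w).
  move=> w wi qw; rewrite dG; last by have [] := hw w wi.
  have sw : sorted leq (rcons (bl w) M) by rewrite (Qrc w qw); exact: (proj1 (hw w wi)).
  have := dcnt sw; rewrite (Qrc w qw) => ->.
  by rewrite mulrnAl mulrnAr.
have dnQ : forall w, w \in ws -> ~~ Q w -> d M (monoR w * g w) = 0.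
  move=> w wi qw; rewrite dG; last by have [] := hw w wi.
  by rewrite dni ?mul0r // notQ.
have szQ : forall w, Q w -> (size (bl w) < size w)%N.
  by move=> w qw; rewrite -{2}(Qrc w qw) size_rcons.
have Qw1 : Q w1 by rewrite /Q w1n w1M eqxx.
pose g1 := fun v => g (rcons v M) *+ count_mem M (rcons v M).
have h1 : forall v, v \in map bl (filter Q ws) -> g1 v = 0.
  apply: (IH _ g1).
  - rewrite big_map big_filter big_mkcond /=.
    have hN' : (\sum_(w <- ws) size w <= N)%N := hN.
    apply: (leq_trans _ hN').
    apply: (sum_lt (G := fun w => size w)).
      by move=> w _; case: ifP => // qw; apply: ltnW; apply: szQ; rewrite qw.
    by exists w1 => //; rewrite Qw1; apply: szQ.
  - rewrite map_inj_in_uniq ?filter_uniq //.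
    move=> x y; rewrite !mem_filter => /andP [qx _] /andP [qy _] e.
    by rewrite -(Qrc x qx) -(Qrc y qy) e.
  - move=> v /mapP [w]; rewrite mem_filter => /andP [qw wi] ->; split.
      apply: (subseq_sorted leq_trans (subseq_rcons _ M)).
      by rewrite (Qrc w qw); exact: (proj1 (hw w wi)).
    by rewrite /g1 (Qrc w qw); apply: GmMn; exact: (proj2 (hw w wi)).
  - rewrite big_map big_filter.
    transitivity (\sum_(w <- ws | Q w) d M (monoR w * g w)).
      rewrite big_seq_cond [RHS]big_seq_cond; apply: eq_bigr => w /andP [wi qw].
      by rewrite dQ // /g1 (Qrc w qw).
    transitivity (d M (\sum_(w <- ws) monoR w * g w)); last by rewrite hs d0.
    rewrite dsum big_mkcond; apply: eq_big_seq => w wi.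
    by case: ifP => qw //; rewrite dnQ ?qw.
have hQ0 : forall w, w \in ws -> Q w -> g w = 0.
  move=> w wi qw.
  have := h1 (bl w) (map_f bl (_ : w \in filter Q ws)).
  rewrite /g1 (Qrc w qw) mem_filter qw wi => e; apply: (tors _ (e _)) => //.
  have Mw : M \in w by rewrite -(Qrc w qw) mem_rcons mem_head.
  rewrite lt0n; apply/eqP => /count_memPn /negP; apply; exact Mw.
have h2 : forall w, w \in filter (predC Q) ws -> g w = 0.
  apply: (IH _ g).
  - rewrite big_filter big_mkcond /=.
    have hN' : (\sum_(w <- ws) size w <= N)%N := hN.
    apply: (leq_trans _ hN').
    apply: (sum_lt (G := fun w => size w)).
      by move=> w _; case: ifP.
    by exists w1 => //; rewrite Qw1 /= lt0n size_eq0.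
  - by rewrite filter_uniq.
  - by move=> w; rewrite mem_filter => /andP [_ wi]; exact: hw.
  - rewrite big_filter.
    have e1 : \sum_(w <- ws | Q w) monoR w * g w = 0.
      rewrite big_seq_cond; apply: big1 => w /andP [wi qw].
      by rewrite hQ0 // mulr0.
    by move: hs; rewrite (bigID Q) /= e1 add0r.
move=> w wi; case: (boolP (Q w)) => qw; first exact: hQ0.
by apply: h2; rewrite mem_filter /= qw wi.
Qed.


Lemma fchoice (ws : seq (seq nat)) (P : seq nat -> R -> Prop) :
  (forall w, w \in ws -> exists a, P w a) ->
  exists g : seq nat -> R, forall w, w \in ws -> P w (g w).
Proof.
elim: ws => [|w0 ws IH] h; first by exists (fun _ => 0).
have [a0 ha0] := h w0 (mem_head _ _).
have [g hg] : exists g : seq nat -> R, forall w, w \in ws -> P w (g w).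
  by apply: IH => w wi; apply: h; rewrite inE wi orbT.
exists (fun w => if w == w0 then a0 else g w) => w; rewrite inE.
by case: eqP => [->|_] //= /hg.
Qed.

Lemma indep0 ws (g : seq nat -> R) : uniq ws ->
  (forall w, w \in ws -> sorted leq w /\ Gm (g w)) ->
  \sum_(w <- ws) monoR w * g w = 0 -> forall w, w \in ws -> g w = 0.
Proof. by apply: (indep (N := (\sum_(w <- ws) size w).+1)). Qed.

Lemma indep_f ws (f : seq nat -> R) : uniq ws ->
  (forall w, w \in ws -> sorted leq w /\ exists2 a, Gm a & f w = monoR w * a) ->
  \sum_(w <- ws) f w = 0 -> forall w, w \in ws -> f w = 0.
Proof.
move=> hu hw hs.
have [g hg] : exists g : seq nat -> R, forall w, w \in ws -> Gm (g w) /\ f w = monoR w * g w.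
  apply: (fchoice (P := fun w a => Gm a /\ f w = monoR w * a)) => w wi.
  by have [_ [a h1 h2]] := hw w wi; exists a.
have h0 := indep0 hu (fun w wi => conj (proj1 (hw w wi)) (proj1 (hg w wi))).
move=> w wi; rewrite (proj2 (hg w wi)) h0 ?mulr0 //.
rewrite -[RHS]hs; apply: eq_big_seq => v vi; exact: (esym (proj2 (hg v vi))).
Qed.

Hypothesis Gm0 : Gm 0.
Hypothesis GmB : forall a b, Gm a -> Gm b -> Gm (a - b).

Lemma indep_gamma ws (a : seq nat -> R) p : uniq ws ->
  (forall w, w \in ws -> sorted leq w /\ Gm (a w)) -> Gm p ->
  p = \sum_(w <- ws) monoR w * a w ->
  p = if [::] \in ws then a [::] else 0.
Proof.
move=> hu hw hp ep.
pose A := if [::] \in ws then a [::] else 0.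
pose g' := fun w : seq nat => if w == [::] then A - p else a w.
have hu' : uniq ([::] :: rem [::] ws).
  by rewrite /= rem_uniq // andbT mem_rem_uniqF.
have hrem : forall w, w \in rem [::] ws -> w != [::] /\ w \in ws.
  by move=> w; rewrite mem_rem_uniq // => /andP [].
have hsum : \sum_(w <- rem [::] ws) monoR w * a w + A = p.
  rewrite ep /A; case: ifP => hin.
    by rewrite [in RHS](big_rem [::] hin) monoR_nil mul1r addrC.
  by rewrite rem_id ?hin // addr0.
have key : g' [::] = 0.
  apply: (indep0 hu' _ _ (mem_head _ _)).
    move=> w; rewrite inE => /orP [/eqP ->|/hrem [wn wi]].
      split => //; rewrite /g' eqxx; apply: GmB => //; rewrite /A.
      by case: ifP => hin //; exact: (proj2 (hw _ hin)).
    by rewrite /g' (negbTE wn); exact: hw.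
  rewrite big_cons /g' eqxx monoR_nil mul1r.
  rewrite (eq_big_seq (fun w => monoR w * a w)); last first.
    by move=> w /hrem [wn _]; rewrite (negbTE wn).
  set S := \sum_(w <- rem [::] ws) _.
  by rewrite -hsum addrAC [S + A]addrC subrr.
move: key; rewrite /g' eqxx => h.
by apply/eqP; rewrite eq_sym -subr_eq0 h.
Qed.
End Indep.


Section Sig.
Variables (M : nat) (sg : R -> {poly R}).
Hypothesis sD : forall a b, sg (a + b) = sg a + sg b.
Hypothesis sM : forall a b, sg (a * b) = sg a * sg b.
Hypothesis sN : forall a, sg (- a) = - sg a.
Hypothesis s1 : sg 1 = 1.
Hypothesis sX : forall j, sg (X j) = (X j)%:P + (if j == M then 'X else 0).

Lemma s_cm a b : sg (cmR a b) = cmR (sg a) (sg b).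
Proof. by rewrite /cmR sD sN !sM. Qed.

Lemma cm_xe (p : {poly R}) j : cmR p (sg (X j)) = cmR p (X j)%:P.
Proof.
rewrite sX cmR_addr; case: (j == M).
  by rewrite [cmR p 'X]cmR_comm ?addr0 //; exact: commr_polyX.
by rewrite [cmR p 0]cmR_comm ?addr0 //; exact: commr0.
Qed.

Lemma cmC (a b : R) : (cmR a b)%:P = cmR a%:P b%:P.
Proof. by rewrite /cmR polyCB !polyCM. Qed.

Lemma s_lnc i j ks : sg (lncR i j ks) = (lncR i j ks)%:P.
Proof.
rewrite /lncR.
have : sg (cmR (X i) (X j)) = (cmR (X i) (X j))%:P.
  rewrite s_cm cm_xe cmC sX cmR_addl [cmR (if _ then _ else _) _]cmR_comm ?addr0 //.
  case: (i == M); last by apply/commr_sym/commr0.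
  by apply/commr_sym/commr_polyX.
elim: ks (cmR (X i) (X j)) => [|k ks IH] a ha //=.
apply: IH.
by rewrite s_cm ha cm_xe cmC.
Qed.

Lemma s0 : sg 0 = 0.
Proof. have h := sD 0 0; rewrite addr0 in h; by apply: (addrI (sg 0)); rewrite addr0 -h. Qed.

Lemma s_mono w : sg (monoR w) = \prod_(j <- w) sg (X j).
Proof. exact: (big_morph _ sM s1). Qed.

Lemma s_mono0 w : (sg (monoR w))`_0 = monoR w.
Proof.
rewrite s_mono /monoR.
elim: w => [|j w IH]; first by rewrite !big_nil coefC.
rewrite !big_cons coef0M IH sX coefD coefC /=.
by case: (j == M); rewrite ?coef0 ?coefX addr0.
Qed.

Definition dR a := (sg a)`_1.

Lemma dR_D a b : dR (a + b) = dR a + dR b.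
Proof. by rewrite /dR sD coefD. Qed.
Lemma dR_0 : dR 0 = 0.
Proof. by rewrite /dR s0 coef0. Qed.
Lemma dR_G w g : sg g = g%:P -> dR (monoR w * g) = dR (monoR w) * g.
Proof. by move=> hg; rewrite /dR sM hg coefMC. Qed.
Lemma dR_rc v : dR (monoR (rcons v M)) = dR (monoR v) * X M + monoR v.
Proof.
rewrite /dR monoR_rcons sM sX eqxx mulrDr coefD coefMC coefMX /=.
by rewrite s_mono0.
Qed.
Lemma dR_ni v : M \notin v -> dR (monoR v) = 0.
Proof.
move=> hM; rewrite /dR s_mono.
have -> : \prod_(j <- v) sg (X j) = (monoR v)%:P.
  rewrite /monoR rmorph_prod; apply: eq_big_seq => j jv.
  rewrite sX; case: eqP => [E|_]; last by rewrite addr0.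
  by move: hM; rewrite -E jv.
by rewrite coefC.
Qed.
End Sig.

End Generic.


Definition xe (M j : nat) : {poly ZX} := (xv j)%:P + (if j == M then 'X else 0).

Definition hword (M : nat) (u : {fmonom nat}) : {poly ZX} :=
  \prod_(j <- fmonom_val u) xe M j.

Lemma hword_mmorph M : mmorphism (hword M).
Proof.
split.
  by move=> u v; rewrite /hword fmM big_cat.
by rewrite /hword fm1 big_nil.
Qed.

HB.instance Definition _ M := isMultiplicative.Build _ _ (hword M) (hword_mmorph M).

Definition sgZ (M : nat) (a : ZX) : {poly ZX} := mmap intr (hword M) a.

Lemma sigD M a b : sgZ M (a + b) = sgZ M a + sgZ M b.
Proof. by rewrite /sgZ mmapD. Qed.
Lemma sigN M a : sgZ M (- a) = - sgZ M a.
Proof. by rewrite /sgZ mmapN. Qed.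
Lemma sigM M a b : sgZ M (a * b) = sgZ M a * sgZ M b.
Proof.
rewrite /sgZ.
have := (@commr_mmap_is_multiplicative _ _ _ intr (hword M)).
by case=> // g m m'; apply/commr_sym/commr_int.
Qed.
Lemma sig1 M : sgZ M 1 = 1.
Proof. by rewrite /sgZ mmap1. Qed.
Lemma sig_xv M j : sgZ M (xv j) = (xv j)%:P + (if j == M then 'X else 0).
Proof.
rewrite /sgZ /xv mmapU /= mul1r /hword fmU.
by rewrite big_cons big_nil mulr1.
Qed.

Lemma Gamma0 : Gamma 0.
Proof. by rewrite -(subrr (1 : ZX)); apply: Gamma_add; [apply: Gamma_1 | apply: Gamma_opp; apply: Gamma_1]. Qed.

Lemma Gamma_nat n : Gamma n%:R.
Proof.
elim: n => [|n IH]; first exact: Gamma0.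
by rewrite mulrS; apply: Gamma_add => //; apply: Gamma_1.
Qed.

Lemma Gamma_int (c : int) : Gamma c%:~R.
Proof.
case: c => n; first exact: Gamma_nat.
by rewrite NegzE mulrNz; apply: Gamma_opp; apply: Gamma_nat.
Qed.

Lemma Gamma_Mn g n : Gamma g -> Gamma (g *+ n).
Proof. by move=> hg; rewrite -mulr_natl; apply: Gamma_mul => //; apply: Gamma_nat. Qed.

Lemma Gamma_B a b : Gamma a -> Gamma b -> Gamma (a - b).
Proof. by move=> ha hb; apply: Gamma_add => //; apply: Gamma_opp. Qed.

Lemma Gamma_ad g k : Gamma g -> Gamma (cmR g (xv k)).
Proof.
elim=> {g} [|i j ks|a b _ ha _ hb|a _ ha|a b ga ha gb hb].
- by rewrite cmR_1l; apply: Gamma0.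
- have -> : cmR (lncomm i j ks) (xv k) = lncomm i j (rcons ks k).
    by rewrite /lncomm foldl_rcons.
  exact: Gamma_comm.
- by rewrite cmR_addl; apply: Gamma_add.
- by rewrite cmR_oppl; apply: Gamma_opp.
- by rewrite cmR_mull; apply: Gamma_add; apply: Gamma_mul.
Qed.

Lemma sig_Gamma M g : Gamma g -> sgZ M g = g%:P.
Proof.
elim=> {g} [|i j ks|a b _ ha _ hb|a _ ha|a b _ ha _ hb].
- by rewrite sig1.
- exact: (@s_lnc _ xv M (sgZ M) (sigD M) (sigM M) (sigN M) (sig_xv M) i j ks).
- by rewrite sigD ha hb polyCD.
- by rewrite sigN ha polyCN.
- by rewrite sigM ha hb polyCM.
Qed.

Lemma torsZ (n : nat) (a : ZX) : (0 < n)%N -> a *+ n = 0 -> a = 0.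
Proof.
move=> hn e; apply/malgP => k.
have := congr1 (mcoeff k) e; rewrite mcoeffMn mcoeff0 => /eqP.
rewrite mulrn_eq0 => /orP [/eqP hn0|/eqP ->] //.
by move: hn; rewrite hn0.
Qed.

Lemma malgU_mono (k : {fmonom nat}) : << k >> = mono (fmonom_val k) :> ZX.
Proof.
rewrite -[k]fmK; elim: (fmonom_val k) => [|a s IH].
  by rewrite /mono big_nil -fmoneE.
have E : FMonom (a :: s) = fmmul (fmu a) (FMonom s) by rewrite fmmulE fmuE.
rewrite [in LHS]E.
have -> : << fmmul (fmu a) (FMonom s) >> = << fmu a >> * << FMonom s >> :> ZX.
  by rewrite malgM_def fgmulUU mulr1.
by rewrite IH /mono /= big_cons.
Qed.

Lemma decompZ (r : ZX) : exists l : seq (seq nat * int),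
  r = \sum_(y <- l) monoR xv y.1 *~ y.2.
Proof.
exists [seq (fmonom_val k, r@_k) | k <- finmap.enum_fset (msupp r)].
rewrite big_map {1}(monalgE r); apply: eq_bigr => k _ /=.
rewrite -[monoR xv _]malgU_mono.
by rewrite -[in LHS](intz (r@_k)) raddfMz.
Qed.

Section Final.
Variable S : ZX -> Prop.
Hypothesis hS : forall s, S s -> Gamma s.

Lemma GI_Gamma a : GammaIdeal S a -> Gamma a.
Proof.
elim=> {a} [s /hS //| |a b _ ha _ hb|g a hg _ ha].
- exact: Gamma0.
- exact: Gamma_add.
- exact: Gamma_mul.
Qed.

Lemma GI_LI a : GammaIdeal S a -> LeftIdeal S a.
Proof.
elim=> {a} [s hs| |a b _ ha _ hb|g a hg _ ha].
- exact: LI_gen.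
- exact: LI_0.
- exact: LI_add.
- exact: LI_lmul.
Qed.

Lemma LI_sum (ws : seq (seq nat)) (f : seq nat -> ZX) :
  (forall w, w \in ws -> LeftIdeal S (f w)) -> LeftIdeal S (\sum_(w <- ws) f w).
Proof.
move=> h; rewrite big_seq; apply: (big_ind (LeftIdeal S)).
- exact: LI_0.
- exact: LI_add.
- exact: h.
Qed.

Lemma LI_NPA p : LeftIdeal S p -> NPA xv (GammaIdeal S) p.
Proof.
elim=> {p} [s hs| |a b _ ha _ hb|r a _ ha].
- exists 0%N.
  have -> : s = monoR xv [::] * s by rewrite monoR_nil mul1r.
  apply: NP1 => //; exact: GI_gen.
- exact: NPA0.
- exact: NPAD.
- have [l el] := decompZ r.
  apply: (NPA_lmul (Gm := Gamma) _ _ _ _ el ha).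
  + by move=> g k hg; apply: Gamma_ad.
  + by move=> i j; apply: (Gamma_comm i j [::]).
  + by move=> g b hg hb; apply: GI_lmul.
  + exact: Gamma_int.
Qed.

Definition dZ (M : nat) (a : ZX) : ZX := dR (sgZ M) a.

Lemma dZ_D M a b : dZ M (a + b) = dZ M a + dZ M b.
Proof. exact: (dR_D (sigD M)). Qed.
Lemma dZ_0 M : dZ M 0 = 0.
Proof. exact: (dR_0 (sigD M)). Qed.
Lemma dZ_G M w g : Gamma g -> dZ M (monoR xv w * g) = dZ M (monoR xv w) * g.
Proof. by move=> hg; apply: (@dR_G _ xv (sgZ M) (sigM M)); apply: sig_Gamma. Qed.
Lemma dZ_rc M v : dZ M (monoR xv (rcons v M)) = dZ M (monoR xv v) * xv M + monoR xv v.
Proof. exact: (@dR_rc _ xv M (sgZ M) (sigM M) (sig1 M) (sig_xv M)). Qed.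
Lemma dZ_ni M v : M \notin v -> dZ M (monoR xv v) = 0.
Proof. exact: (@dR_ni _ xv M (sgZ M) (sigM M) (sig1 M) (sig_xv M)). Qed.

End Final.

Theorem lemma2p4 (S : ZX -> Prop) (hS : forall s, S s -> Gamma s) :
  (* I is the sum of the summands *)
  (forall p : ZX, LeftIdeal S p <->
     exists ws f, sumFamily S ws f /\ p = \sum_(w <- ws) f w) /\
  (* the sum is direct *)
  (forall ws f, sumFamily S ws f -> \sum_(w <- ws) f w = 0 ->
     forall w, w \in ws -> f w = 0) /\
  (* in particular I /\ Gamma = Gamma . S *)
  (forall p : ZX, (LeftIdeal S p /\ Gamma p) <-> GammaIdeal S p).
Proof.
have part1 : forall p : ZX, LeftIdeal S p <->
     exists ws f, sumFamily S ws f /\ p = \sum_(w <- ws) f w.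
  move=> p; split.
    move=> /LI_NPA [n hn].
    have [ws [f [hu [hw ep]]]] := NP_group (GI_0 S) (@GI_add S) hn.
    by exists ws, f.
  move=> [ws [f [[hu hw] ->]]]; apply: LI_sum => w wi.
  have [_ [a ha ->]] := hw w wi.
  by apply: LI_lmul; apply: GI_LI.
have hind := @indep_f _ xv Gamma dZ dZ_D dZ_0 dZ_G dZ_rc dZ_ni torsZ Gamma_Mn.
split => //; split.
  move=> ws f [hu hw] hs; apply: (hind ws f hu _ hs) => w wi.
  have [s [a ha e]] := hw w wi; split => //; exists a => //.
  exact: (GI_Gamma hS).
move=> p; split; last first.
  by move=> hp; split; [apply: GI_LI | apply: (GI_Gamma hS)].
move=> [/part1 [ws [f [[hu hw] ep]]] hp].
have [a ha] : exists a : seq nat -> ZX, forall w, w \in ws ->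
    GammaIdeal S (a w) /\ f w = mono w * a w.
  apply: (fchoice (P := fun w a => GammaIdeal S a /\ f w = mono w * a)) => w wi.
  by have [_ [b h1 h2]] := hw w wi; exists b.
have hind2 := @indep_gamma _ xv Gamma dZ dZ_D dZ_0 dZ_G dZ_rc dZ_ni torsZ Gamma_Mn
  Gamma0 Gamma_B ws a p hu.
have e : p = \sum_(w <- ws) monoR xv w * a w.
  by rewrite ep; apply: eq_big_seq => w wi; exact: (proj2 (ha w wi)).
rewrite (hind2 _ hp e).
  by case: ifP => hin; [exact: (proj1 (ha _ hin)) | exact: GI_0].
move=> w wi; split; first by have [] := hw w wi.
exact: (GI_Gamma hS (proj1 (ha w wi))).
Qed.
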